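(* Let $\lambda_{\max}=1$ and let $F:[0,1]\to\mathbb{R}_+$ be continuously differentiable with $F(0)=0$, such that $F(x)<F^\star$ for all $x\in[0,1)$ and $F'(1)>0$. Then there exist constants $c>0$ and $\varepsilon_0>0$ (depending on $F$) such that for every $\varepsilon\in(0,\varepsilon_0]$ and every stable control policy $\lambda:\mathbb{Z}_+\to[0,1]$ with regret $R(\lambda)\le\varepsilon$, we have $\mathbb{E}_\pi[\bar q]\ge c/\varepsilon$. That is, $q^\star(\varepsilon)=\Omega(1/\varepsilon)$.
   Context: A control policy is a function $\lambda:\mathbb{Z}_+\to[0,\lambda_{\max}]$; it defines a continuous-time birth–death chain on $\mathbb{Z}_+$ with rate $\lambda(q)$ from $q$ to $q+1$ and rate $1$ from $q$ to $q-1$ ($q\ge1$). Let $\mathcal S$ be the set of states reachable from $0$. The policy is stable if $\sum_{i\in\mathcal S}\prod_{q=0}^{i}\lambda(q)<\infty$ (positive recurrence on $\mathcal S$); then $\pi$ is the stationary distribution and $\bar q\sim\pi$. Define $F^\star=\sup\{\mathbb{E}_\alpha[F(X)]:\alpha$ a probability measure on $[0,\lambda_{\max}]$, $X\sim\alpha$, $\mathbb{E}_\alpha[X]\le1\}$, the regret $R(\lambda)=F^\star-\mathbb{E}_\pi[F(\lambda(\bar q))]$, and $q^\star(\varepsilon)=\inf\{\mathbb{E}_\pi[\bar q]: \lambda \text{ stable},\ R(\lambda)\le\varepsilon\}$. *)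

(* Defs.v *)
From HB Require Import structures.
From mathcomp Require Import all_boot all_order all_algebra.
From mathcomp Require Import all_classical all_reals all_analysis.
Set Implicit Arguments. Unset Strict Implicit. Unset Printing Implicit Defensive.
Import Order.TTheory GRing.Theory Num.Theory.
Import numFieldNormedType.Exports.
Local Open Scope classical_set_scope.
Local Open Scope ring_scope.

Section Defs.
Variable R : realType.

Definition C1_on01 (F F' : R -> R) : Prop :=
  (forall x : R, (0 <= x <= 1)%R ->
     (fun h : R => h^-1 * (F (x + h) - F x))%R
       @ within [set h : R | (0 <= x + h <= 1)%R] (0 : R)^' --> F' x)
  /\ {within `[0%R, 1%R]%classic, continuous F'}.

Definition Fstar (F : R -> R) : \bar R :=
  ereal_sup [set (\int[P]_(x in `[0%R, 1%R]%classic) (F x)%:E)%E |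
             P in [set P : probability R R |
                   P `[0%R, 1%R]%classic = 1%E /\ (\int[P]_(x in `[0%R, 1%R]%classic) x%:E <= 1%:E)%E]].

Definition policy (lam : nat -> R) : Prop := forall q, (0 <= lam q <= 1)%R.

(* unnormalized stationary weight of state i : prod_{q < i} lambda(q)
   (zero exactly outside the set S of states reachable from 0) *)
Definition weight (lam : nat -> R) (i : nat) : R := (\prod_(q < i) lam q)%R.

(* stability: sum_{i in S} prod_{q=0}^{i} lambda(q) < oo
   (terms with i not in S vanish, so the sum may range over all i) *)
Definition stable (lam : nat -> R) : Prop :=
  (\sum_(0 <= i <oo) (\prod_(q < i.+1) lam q)%:E < +oo)%E.

Definition normconst (lam : nat -> R) : R :=
  fine (\sum_(0 <= i <oo) (weight lam i)%:E).

Definition pi_st (lam : nat -> R) (i : nat) : R :=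
  (weight lam i / normconst lam)%R.

Definition Epi (lam : nat -> R) (g : nat -> R) : \bar R :=
  \sum_(0 <= i <oo) (pi_st lam i * g i)%:E.

Definition regret (F : R -> R) (lam : nat -> R) : \bar R :=
  (Fstar F - Epi lam (fun i => F (lam i)))%E.

Definition Eq (lam : nat -> R) : \bar R := Epi lam (fun i => i%:R).

End Defs.

(* Main.v *)
Require Import Defs.
From HB Require Import structures.
From mathcomp Require Import all_boot all_order all_algebra.
From mathcomp Require Import all_classical all_reals all_analysis.
From mathcomp Require Import lra ring.
Import Order.TTheory GRing.Theory Num.Theory.
Import numFieldNormedType.Exports.
Local Open Scope classical_set_scope.
Local Open Scope ring_scope.
Lemma extract (R : realType) (F F' : R -> R) (x : R) :
  (fun h : R => h^-1 * (F (x + h) - F x))%R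
       @ within [set h : R | (0 <= x + h <= 1)%R] (0 : R)^' --> F' x ->
  forall e : R, 0 < e -> exists2 d : R, 0 < d &
    forall h : R, `|h| < d -> h != 0 -> 0 <= x + h <= 1 ->
      `|F' x - h^-1 * (F (x + h) - F x)| < e.
Proof.
move=> /cvgrPdist_lt H e e0.
have := H e e0.
rewrite /prop_near1 /within /=.
move=> /nbhs_ballP [d /= d0 Hd]; exists d => // h hd h0 hA.
apply: Hd => //.
rewrite /ball /= sub0r normrN //.
Qed.

Lemma loclip (R : realType) (F F' : R -> R) (x : R) :
  C1_on01 F F' -> 0 <= x <= 1 ->
  exists2 d : R, 0 < d & forall y, 0 <= y <= 1 -> `|y - x| < d ->
     `|F y - F x| <= (`|F' x| + 1) * `|y - x|.
Proof.
move=> [HD _] hx.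
have [d d0 Hd] := @extract R F F' x (HD x hx) 1 ltr01.
exists d => // y hy hyx.
have [->|yx] := eqVneq y x; first by rewrite !subrr normr0 mulr0.
have h0 : y - x != 0 by rewrite subr_eq0.
have := Hd (y - x) hyx h0; rewrite addrC subrK => /(_ hy) H.
have E : F y - F x = (y - x) * ((y - x)^-1 * (F y - F x)).
  by rewrite mulrA mulfV // mul1r.
rewrite E normrM mulrC ler_wpM2r //.
set q := (y - x)^-1 * (F y - F x).
have H2 := ler_normB (F' x) (F' x - q).
rewrite opprB addrC subrK in H2.
by rewrite (le_trans H2) // lerD2l ltW.
Qed.

Lemma Fcont (R : realType) (F F' : R -> R) :
  C1_on01 F F' -> {within `[0%R, 1%R], continuous F}.
Proof.
move=> C; apply/subspace_continuousP => x /= hx.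
have hx' : 0 <= x <= 1 by move: hx; rewrite in_itv.
have [d d0 Hd] := loclip _ _ _ _ C hx'.
apply/cvgrPdist_lt => e e0.
rewrite /prop_near1 /within /=.
apply/nbhs_ballP.
set K := `|F' x| + 1.
have K0 : 0 < K by rewrite ltr_pwDr.
exists (Num.min d (e / K)); first by rewrite /= lt_min d0 divr_gt0.
move=> y; rewrite /ball /= lt_min => /andP [h1 h2] hy.
have hy' : 0 <= y <= 1 by move: hy; rewrite in_itv.
rewrite distrC in h1 h2.
rewrite distrC (le_lt_trans (Hd y hy' h1)) //.
by rewrite -ltr_pdivlMl // mulrC.
Qed.

Lemma gap (R : realType) (F F' : R -> R) (T : R) :
  C1_on01 F F' -> (forall x, 0 <= x < 1 -> F x < T) -> F 1 <= T -> 0 < F' 1 ->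
  exists2 k : R, 0 < k & forall x, 0 <= x <= 1 -> F x <= T - k * (1 - x).
Proof.
move=> C HT H1 Hp.
have Cc := Fcont _ _ _ C.
case: C => HD _.
have h01 : 0 <= (1:R) <= 1 by rewrite ler01 lexx.
have e0 : 0 < F' 1 / 2 by rewrite divr_gt0.
have [d d0 Hd] := extract _ _ _ _ (HD 1 h01) _ e0.
set d' := Num.min d 1 / 2.
have d'0 : 0 < d' by rewrite divr_gt0 // lt_min d0 ltr01.
have d'1 : d' < d /\ d' <= 1 /2.
  have : Num.min d 1 <= d /\ Num.min d 1 <= 1 by split; rewrite ge_min lexx ?orbT.
  rewrite /d'; lra.
set a := 1 - d'.
have a0 : 0 <= a by rewrite /a; lra.
have sub : `[0, a] `<=` `[0, 1].
  move=> t /=; rewrite !in_itv /= => /andP [t0 t1]; apply/andP; split; rewrite /a in t1; lra.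
have [c hc Hc] := EVT_max a0 (continuous_subspaceW sub Cc).
have hc' : 0 <= c <= a by move: hc; rewrite in_itv.
have Fc : F c < T by apply: HT; apply/andP; split; move/andP: hc' => [c0 c1]; rewrite /a in c1; lra.
exists (Num.min (F' 1 / 2) (T - F c)).
  by rewrite lt_min e0 subr_gt0 Fc.
have k1 : Num.min (F' 1 / 2) (T - F c) <= F' 1 / 2 by rewrite ge_min lexx.
have k2 : Num.min (F' 1 / 2) (T - F c) <= T - F c by rewrite ge_min lexx orbT.
set k := Num.min (F' 1 / 2) (T - F c) in k1 k2 *.
move=> x /andP [x0 x1].
have [xa|ax] := lerP x a.
  have : F x <= F c by apply: Hc; rewrite in_itv /= x0 xa.
  have k0 : 0 <= k by rewrite le_min (ltW e0) subr_ge0 ltW.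
  have : k * (1 - x) <= k * 1.
    by rewrite ler_wpM2l //; lra.
  lra.
have [->|x1'] := eqVneq x 1; first by rewrite subrr mulr0 subr0.
have hx : x - 1 < 0 by have := x1; rewrite le_eqVlt (negbTE x1') /=; lra.
have := Hd (x - 1).
have E : 1 + (x - 1) = x by rewrite addrC subrK.
rewrite E.
have hxd : `|x - 1| < d by rewrite ltr0_norm //; move: d'1 => [? ?]; rewrite /a in ax; lra.
have hx0 : x - 1 != 0 by rewrite lt_eqF.
move=> /(_ hxd hx0) /=; rewrite x0 x1 => /(_ isT) H.
have H2 : F' 1 / 2 < (x - 1)^-1 * (F x - F 1).
  move: H; rewrite ltr_norml => /andP [_]; lra.
have H3 : F x - F 1 < F' 1 / 2 * (x - 1).
  have E2 : F x - F 1 = (x - 1) * ((x - 1)^-1 * (F x - F 1)).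
    by rewrite mulrA mulfV // mul1r.
  by rewrite E2 [_ * (x - 1)]mulrC ltr_nM2l.
have : k * (1 - x) <= F' 1 / 2 * (1 - x) by rewrite ler_wpM2r //; lra.
lra.
Qed.

Lemma Tex (R : realType) (F F' : R -> R) :
  C1_on01 F F' ->
  (forall x : R, 0 <= x < 1 -> ((F x)%:E < Fstar F)%E) ->
  exists T : R, (T%:E <= Fstar F)%E /\ (forall x, 0 <= x < 1 -> F x < T) /\ F 1 <= T.
Proof.
move=> C HS.
have h01 : 0 <= (1:R) <= 1 by rewrite ler01 lexx.
case E : (Fstar F) => [r| |].
- exists r; split => //; split.
    by move=> x hx; have := HS x hx; rewrite E lte_fin.
  rewrite leNgt; apply/negP => r1.
  have [d d0 Hd] := loclip _ _ _ _ C h01.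
  set K := `|F' 1| + 1.
  have K0 : 0 < K by rewrite ltr_pwDr.
  set m := Num.min (Num.min d 1) ((F 1 - r) / K).
  have hm1 : m <= Num.min d 1 by rewrite ge_min lexx.
  have hm2 : m <= (F 1 - r) / K by rewrite ge_min lexx orbT.
  have hm3 : Num.min d 1 <= d by rewrite ge_min lexx.
  have hm4 : Num.min d 1 <= 1 by rewrite ge_min lexx orbT.
  have hp : 0 < m.
    by rewrite !lt_min d0 ltr01 divr_gt0 // subr_gt0.
  have Km : K * m <= F 1 - r.
    have : K * m <= K * ((F 1 - r) / K) by rewrite ler_wpM2l // ltW.
    have E1 : K * ((F 1 - r) / K) = F 1 - r by rewrite mulrC divfK // gt_eqF.
    by rewrite E1.
  have y01 : 0 <= 1 - m / 2 <= 1 by apply/andP; split; lra.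
  have m2 : 0 < m / 2 by lra.
  have Ey : 1 - m / 2 - 1 = - (m / 2) by rewrite addrAC subrr add0r.
  have yd : `|1 - m / 2 - 1| < d.
    rewrite Ey normrN (gtr0_norm m2); lra.
  have H2 := Hd _ y01 yd.
  rewrite Ey normrN (gtr0_norm m2) -/K in H2.
  have H3 : F (1 - m / 2) < r.
    have := HS (1 - m / 2); rewrite E lte_fin; apply; apply/andP; split; lra.
  have H4 : K * (m / 2) <= (F 1 - r) / 2 by rewrite mulrA; lra.
  have := ler_norm (F 1 - F (1 - m / 2)).
  rewrite distrC in H2.
  lra.
- have [c hc Hc] := EVT_max ler01 (Fcont _ _ _ C).
  exists (F c + 1); split; first by rewrite leey.
  have B : forall x, 0 <= x <= 1 -> F x <= F c.
    by move=> x hx; apply: Hc; rewrite in_itv.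
  split; last by have := B 1 h01; lra.
  move=> x /andP [x0 x1]; have := B x; rewrite x0 (ltW x1) => /(_ isT); lra.
- exfalso.
  have h0 : 0 <= (0:R) < 1 by rewrite lexx ltr01.
  by have := HS 0 h0; rewrite E ltNge leNye.
Qed.
Lemma nnser_le (R : realType) (u : nat -> R) (c : \bar R) :
  (forall i, 0 <= u i) ->
  (forall n, ((\sum_(0 <= i < n) u i)%:E <= c)%E) ->
  (\sum_(0 <= i <oo) (u i)%:E <= c)%E.
Proof.
move=> u0 H; apply: lime_le.
  by apply: is_cvg_nneseries => n _ _; rewrite lee_fin.
by apply: nearW => n; rewrite /= sumEFin.
Qed.

Lemma nnser_ge (R : realType) (u : nat -> R) n :
  (forall i, 0 <= u i) ->
  ((\sum_(0 <= i < n) u i)%:E <= \sum_(0 <= i <oo) (u i)%:E)%E.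
Proof.
move=> u0; rewrite -sumEFin; apply: nneseries_lim_ge => k _ _; rewrite lee_fin //.
Qed.

Lemma weightS (R : realType) (lam : nat -> R) i :
  weight lam i.+1 = weight lam i * lam i.
Proof. by rewrite /weight big_ord_recr. Qed.

Lemma weight0 (R : realType) (lam : nat -> R) : weight lam 0 = 1.
Proof. by rewrite /weight big_ord0. Qed.

Lemma weight_bnd (R : realType) (lam : nat -> R) : policy lam ->
  forall i, 0 <= weight lam i <= 1.
Proof.
move=> P; elim => [|i IH]; first by rewrite weight0 ler01 lexx.
rewrite weightS; have := P i; move: IH => /andP [a b] /andP [c d].
by rewrite mulr_ge0 //= mulr_ile1.
Qed.

Lemma Zfin (R : realType) (lam : nat -> R) : policy lam -> stable lam ->
  (\sum_(0 <= i <oo) (weight lam i)%:E)%E = (normconst lam)%:E /\ 1 <= normconst lam.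
Proof.
move=> P S.
have w0 := weight_bnd _ _ P.
have wge0 i : 0 <= weight lam i by case/andP: (w0 i).
set Zs := (\sum_(0 <= i <oo) (weight lam i)%:E)%E.
have up : (Zs <= 1%:E + \sum_(0 <= i <oo) (\prod_(q < i.+1) lam q)%:E)%E.
  apply: nnser_le => // n.
  have : \sum_(0 <= i < n) weight lam i <= \sum_(0 <= i < n.+1) weight lam i.
    by rewrite big_nat_recr //= lerDl.
  rewrite big_nat_recl // weight0 => H.
  apply: (le_trans (_ : _ <= (1 + \sum_(0 <= i < n) weight lam i.+1)%:E)%E).
    by rewrite lee_fin.
  rewrite EFinD leeD2l //.
  exact: (nnser_ge _ (fun i => weight lam i.+1)).
have lo : (1%:E <= Zs)%E.
  have := nnser_ge _ (weight lam) 1 wge0.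
  by rewrite big_nat1 weight0.
have fin : Zs \is a fin_num.
  rewrite fin_numE; apply/andP; split.
    by apply: contraTN lo => /eqP ->; rewrite leNgt ltNyr.
  rewrite lt_eqF //; apply: (le_lt_trans up).
  by rewrite lte_add_pinfty // ltry.
rewrite /normconst -/Zs fineK //; split => //.
by rewrite -lee_fin fineK.
Qed.

Lemma tele (R : realType) (lam : nat -> R) (T k : R) n :
  \sum_(0 <= i < n) weight lam i * (T - k * (1 - lam i)) =
  T * \sum_(0 <= i < n) weight lam i - k * (1 - weight lam n).
Proof.
elim: n => [|n IH]; first by rewrite !big_geq // weight0 subrr !mulr0 subrr.
rewrite !big_nat_recr //= IH weightS; ring.
Qed.

Lemma Epi_bound (R : realType) (F : R -> R) (lam : nat -> R) (T k : R) :
  policy lam -> stable lam -> 0 <= k <= T ->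
  (forall x, 0 <= x <= 1 -> F x <= T - k * (1 - x)) ->
  (forall x, 0 <= x <= 1 -> 0 <= F x) ->
  (Epi lam (fun i => F (lam i)) <= (T - k / normconst lam)%:E)%E.
Proof.
move=> P S /andP [k0 kT] Hg HF.
have [ZE Z1] := Zfin _ _ P S.
have Z0 : 0 < normconst lam by lra.
have w0 := weight_bnd _ _ P.
have wge0 i : 0 <= weight lam i by case/andP: (w0 i).
set Z := normconst lam in ZE Z1 Z0 *.
have pi_ge0 i : 0 <= pi_st lam i by rewrite /pi_st divr_ge0 // ltW.
apply: nnser_le => [i|n].
  by rewrite mulr_ge0 // HF // P.
rewrite lee_fin.
have Hs : \sum_(0 <= i < n) pi_st lam i * F (lam i) <=
   \sum_(0 <= i < n) (weight lam i * (T - k * (1 - lam i))) * Z^-1.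
  apply: ler_sum => i _.
  rewrite /pi_st -/Z mulrAC; apply: ler_wpM2r; first by rewrite invr_ge0 ltW.
  apply: ler_wpM2l => //.
  exact: Hg (P i).
rewrite (le_trans Hs) // -mulr_suml tele ler_pdivrMr // mulrBl mulfVK ?gt_eqF //.
have HA : \sum_(0 <= i < n.+1) weight lam i <= Z.
  by rewrite -lee_fin -ZE; apply: nnser_ge.
rewrite big_nat_recr // in HA.
have := wge0 n.
set A := \sum_(0 <= i < n) weight lam i in HA *.
move=> wn.
have : T * (A + weight lam n) <= T * Z by rewrite ler_wpM2l //; lra.
have : k * weight lam n <= T * weight lam n by rewrite ler_wpM2r.
lra.
Qed.

Lemma quad (R : realType) (lam : nat -> R) : policy lam -> forall N,
  \sum_(0 <= i < N) weight lam i <= N%:R /\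
  (\sum_(0 <= i < N) weight lam i) * (\sum_(0 <= i < N) weight lam i - 1)
    <= 2 * \sum_(0 <= i < N) (i%:R * weight lam i).
Proof.
move=> P; have w0 := weight_bnd _ _ P.
elim => [|N [IH1 IH2]]; first by rewrite !big_geq // mul0r mulr0.
rewrite !big_nat_recr //=.
have := w0 N => /andP [wa wb].
set A := \sum_(0 <= i < N) weight lam i in IH1 IH2 *.
set B := \sum_(0 <= i < N) (i%:R * weight lam i) in IH2 *.
set w := weight lam N in wa wb *.
split; first by rewrite -natr1; lra.
have : 0 <= w * (2 * N%:R - 2 * A - w + 1) by rewrite mulr_ge0 //; lra.
nra.
Qed.

Lemma Eq_bound (R : realType) (lam : nat -> R) : policy lam -> stable lam ->
  4 <= normconst lam -> ((normconst lam / 16)%:E <= Eq lam)%E.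
Proof.
move=> P S Z4.
have [ZE Z1] := Zfin _ _ P S.
have w0 := weight_bnd _ _ P.
have wge0 i : 0 <= weight lam i by case/andP: (w0 i).
set Z := normconst lam in ZE Z1 Z4 *.
have [N HN] : exists N, Z / 2 <= \sum_(0 <= i < N) weight lam i.
  case: (pselect (exists N, Z / 2 <= \sum_(0 <= i < N) weight lam i)) => // H.
  exfalso.
  have : (\sum_(0 <= i <oo) (weight lam i)%:E <= (Z / 2)%:E)%E.
    apply: nnser_le => // n; rewrite lee_fin leNgt; apply/negP => Hn.
    by apply: H; exists n; rewrite ltW.
  rewrite ZE lee_fin; lra.
have [_ HQ] := quad _ _ P N.
set A := \sum_(0 <= i < N) weight lam i in HN HQ.
set B := \sum_(0 <= i < N) (i%:R * weight lam i) in HQ.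
have HB : Z / 16 <= B / Z.
  rewrite ler_pdivlMr; last lra.
  have : Z * Z / 4 <= A * A by nra.
  have : A * A / 2 <= A * (A - 1) by nra.
  nra.
apply: (le_trans (_ : _ <= (B / Z)%:E)%E); first by rewrite lee_fin.
have Hge : forall i, 0 <= pi_st lam i * i%:R.
  by move=> i; rewrite mulr_ge0 ?ler0n // /pi_st -/Z divr_ge0 //; lra.
rewrite /Eq /Epi; apply: (le_trans _ (nnser_ge _ _ N Hge)).
rewrite lee_fin /B mulr_suml le_eqVlt; apply/orP; left; apply/eqP.
apply: eq_bigr => i _.
by rewrite /pi_st /Z; ring.
Qed.

Theorem proposition5p1 (R : realType) (F F' : R -> R) :
  C1_on01 F F' ->
  (forall x : R, 0 <= x <= 1 -> 0 <= F x) ->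
  F 0 = 0 ->
  (forall x : R, 0 <= x < 1 -> ((F x)%:E < Fstar F)%E) ->
  0 < F' 1 ->
  exists c : R, exists eps0 : R, 0 < c /\ 0 < eps0 /\
    forall (eps : R) (lam : nat -> R),
      0 < eps <= eps0 ->
      policy lam -> stable lam ->
      (regret F lam <= eps%:E)%E ->
      ((c / eps)%:E <= Eq lam)%E.
Proof.
move=> C HF0 F0 HS Hp.
have [T [TS [HT H1]]] := Tex _ _ _ C HS.
have [k0 k00 Hk0] := gap _ _ _ T C HT H1 Hp.
have T0 : 0 < T.
  by rewrite -F0; apply: HT; rewrite lexx ltr01.
set k := Num.min k0 T.
have kk0 : k <= k0 by rewrite ge_min lexx.
have kT : k <= T by rewrite ge_min lexx orbT.
have k0' : 0 < k by rewrite lt_min k00 T0.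
have Hk : forall x, 0 <= x <= 1 -> F x <= T - k * (1 - x).
  move=> x hx; have := Hk0 x hx; case/andP: hx => x0 x1.
  have : k * (1 - x) <= k0 * (1 - x) by rewrite ler_wpM2r //; lra.
  lra.
exists (k / 16), (k / 4); split; first lra; split; first lra.
move=> eps lam /andP [e0 e1] P S Hreg.
have [ZE Z1] := Zfin _ _ P S.
have kT' : 0 <= k <= T by rewrite (ltW k0') kT.
have HE := Epi_bound _ F lam T k P S kT' Hk HF0.
have HR : ((k / normconst lam)%:E <= regret F lam)%E.
  have := leeB TS HE.
  by rewrite -EFinD opprB addrC subrK.
have Hk1 : k / normconst lam <= eps by rewrite -lee_fin (le_trans HR).
set Z := normconst lam in ZE Z1 HE HR Hk1 *.
have kZ : k <= eps * Z.
  by rewrite -ler_pdivrMr; last lra.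
have Z4 : 4 <= Z.
  have : k <= k / 4 * Z.
    apply: (le_trans kZ); rewrite ler_wpM2r //; lra.
  nra.
apply: (le_trans _ (Eq_bound _ _ P S Z4)).
rewrite lee_fin -/Z ler_pdivrMr // mulrC.
have : k <= Z * eps by rewrite mulrC.
lra.
Qed.
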